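(* Let $r\ge2$ and for $i=1,\ldots,r$ let $\mathcal{A}_i=t_i\,\mathbf a_i\otimes\mathbf b_i\otimes\mathbf c_i\in\mathbb{R}^{m_1\times m_2\times m_3}$ be rank-1 tensors with $t_i\in\mathbb{R}\setminus\{0\}$ and $\|\mathbf a_i\|=\|\mathbf b_i\|=\|\mathbf c_i\|=1$. Then \[\kappa(\mathcal{A}_1,\ldots,\mathcal{A}_r)\ge\max_{1\le i\ne j\le r}\frac{1}{\sqrt{1-|\langle\mathbf c_i,\mathbf c_j\rangle|}}\] (with the right-hand side interpreted as $\infty$ if some $|\langle\mathbf c_i,\mathbf c_j\rangle|=1$).
   Context: $\mathcal{S}$ denotes the manifold of rank-1 tensors in $\mathbb{R}^{m_1\times m_2\times m_3}$. The condition number is $\kappa(\mathcal{A}_1,\ldots,\mathcal{A}_r)=1/\varsigma_{\min}([U_1\ \cdots\ U_r])$, where $U_i$ is a matrix whose columns form an orthonormal basis of the tangent space $T_{\mathcal{A}_i}\mathcal{S}\subset\mathbb{R}^{m_1m_2m_3}$ and $\varsigma_{\min}$ denotes the smallest singular value ($\kappa=\infty$ if it is zero). $\langle\cdot,\cdot\rangle$ is the Euclidean inner product. *)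

(* Defs.v *)
From HB Require Import structures.
From mathcomp Require Import all_boot all_order all_algebra.
From mathcomp Require Import mxtens.
From mathcomp Require Import classical_sets reals constructive_ereal ereal.
Set Implicit Arguments. Unset Strict Implicit. Unset Printing Implicit Defensive.
Import Order.TTheory GRing.Theory Num.Theory.
Local Open Scope ring_scope.
Local Open Scope classical_set_scope.

Section Defs.
Variable R : realType.

Definition dotv {n} (u v : 'cV[R]_n) : R := (u^T *m v) 0 0.
Definition normv {n} (u : 'cV[R]_n) : R := Num.sqrt (dotv u u).

(* a (x) b (x) c as a vector of R^(m1*m2*m3) (Kronecker product) *)
Definition tens3 {m1 m2 m3} (a : 'cV[R]_m1) (b : 'cV[R]_m2) (c : 'cV[R]_m3)
  : 'cV[R]_(m1 * m2 * m3) := (a *t b) *t c.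

(* Tangent space of the Segre manifold S at t * a(x)b(x)c (t <> 0):
   { x(x)b(x)c + a(x)y(x)c + a(x)b(x)z }. *)
Definition in_tangent {m1 m2 m3} (a : 'cV[R]_m1) (b : 'cV[R]_m2) (c : 'cV[R]_m3)
  (v : 'cV[R]_(m1 * m2 * m3)) : Prop :=
  exists x y z, v = tens3 x b c + tens3 a y c + tens3 a b z.

Definition is_onb_tangent {m1 m2 m3 d} (a : 'cV[R]_m1) (b : 'cV[R]_m2)
  (c : 'cV[R]_m3) (U : 'M[R]_(m1 * m2 * m3, d)) : Prop :=
  U^T *m U = 1%:M /\
  forall v, (exists w : 'cV[R]_d, v = U *m w) <-> in_tangent a b c v.

(* smallest singular value of an N x n matrix: min_{|x| = 1} |M x|
   (this is the n-th singular value; it is 0 when n > N). *)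
Definition sigma_min {N n} (M : 'M[R]_(N, n)) : R :=
  inf [set normv (M *m x) | x in [set x : 'cV[R]_n | normv x = 1]].

Definition kappa {N n} (M : 'M[R]_(N, n)) : \bar R :=
  if sigma_min M == 0 then +oo%E else ((sigma_min M)^-1)%:E.

Definition inv_sqrt_gap (s : R) : \bar R :=
  if `|s| == 1 then +oo%E else ((Num.sqrt (1 - `|s|))^-1)%:E.

End Defs.

(* Main.v *)
Require Import Defs.
From HB Require Import structures.
From mathcomp Require Import all_boot all_order all_algebra.
From mathcomp Require Import mxtens.
From mathcomp Require Import classical_sets reals constructive_ereal ereal.
From mathcomp Require Import ring lra.
Import Order.TTheory GRing.Theory Num.Theory.
Local Open Scope ring_scope.

Section Helpers.
Variable R : realType.

Lemma tens11E (A B : 'M[R]_1) i j : (A *t B) i j = A 0 0 * B 0 0.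
Proof. by rewrite mxE !ord1 /=; congr (A _ _ * B _ _); apply: val_inj. Qed.

Lemma dot_tens3 m1 m2 m3 (a a' : 'cV[R]_m1) (b b' : 'cV[R]_m2) (c c' : 'cV[R]_m3) :
  dotv (tens3 a b c) (tens3 a' b' c') = dotv a a' * dotv b b' * dotv c c'.
Proof.
have E : (tens3 a b c)^T *m tens3 a' b' c' =
  (((a^T *m a') *t (b^T *m b')) *t (c^T *m c')).
  by rewrite /tens3 -!tensmx_mul -!trmx_tens.
by rewrite /dotv E tens11E tens11E.
Qed.

Lemma dotvDl n (u v w : 'cV[R]_n) : dotv (u + v) w = dotv u w + dotv v w.
Proof. by rewrite /dotv linearD /= mulmxDl mxE. Qed.
Lemma dotvDr n (u v w : 'cV[R]_n) : dotv w (u + v) = dotv w u + dotv w v.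
Proof. by rewrite /dotv mulmxDr mxE. Qed.
Lemma dotvZl n k (u v : 'cV[R]_n) : dotv (k *: u) v = k * dotv u v.
Proof. by rewrite /dotv linearZ /= -scalemxAl mxE. Qed.
Lemma dotvZr n k (u v : 'cV[R]_n) : dotv u (k *: v) = k * dotv u v.
Proof. by rewrite /dotv -scalemxAr mxE. Qed.
Lemma dotvC n (u v : 'cV[R]_n) : dotv u v = dotv v u.
Proof. by rewrite /dotv -[in LHS](trmxK v) -trmx_mul mxE. Qed.

Lemma normv1 n (u : 'cV[R]_n) : normv u = 1 -> dotv u u = 1.
Proof.
rewrite /normv => h.
have h0 : 0 <= dotv u u.
  rewrite leNgt; apply/negP => /ltr0_sqrtr; rewrite h => /eqP; by rewrite oner_eq0.
by rewrite -(sqr_sqrtr h0) h expr1n.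
Qed.

Lemma proj_onb n d (U : 'M[R]_(n, d)) (v : 'cV_n) :
  U^T *m U = 1%:M -> (exists w : 'cV_d, v = U *m w) -> U *m (U^T *m v) = v.
Proof. by move=> hU [w ->]; rewrite !mulmxA -(mulmxA U) hU mulmx1. Qed.

Lemma dot_onb n d (U : 'M[R]_(n, d)) (v : 'cV_n) :
  U^T *m U = 1%:M -> (exists w : 'cV_d, v = U *m w) ->
  dotv (U^T *m v) (U^T *m v) = dotv v v.
Proof.
move=> hU hv; rewrite /dotv trmx_mul trmxK -mulmxA proj_onb //.
Qed.

End Helpers.

Theorem lemma3p1 (R : realType) (m1 m2 m3 r : nat) (hr : (2 <= r)%N)
  (t : 'I_r -> R) (a : 'I_r -> 'cV[R]_m1) (b : 'I_r -> 'cV[R]_m2)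
  (c : 'I_r -> 'cV[R]_m3)
  (ht : forall i, t i != 0)
  (ha : forall i, normv (a i) = 1) (hb : forall i, normv (b i) = 1)
  (hc : forall i, normv (c i) = 1)
  (d : 'I_r -> nat) (U : forall i : 'I_r, 'M[R]_(m1 * m2 * m3, d i))
  (hU : forall i, is_onb_tangent (a i) (b i) (c i) (U i)) :
  forall i j : 'I_r, i != j ->
    (inv_sqrt_gap (dotv (c i) (c j)) <= kappa (\mxrow_(k < r) U k))%E.
Proof.
move=> i j hij.
set M := \mxrow_(k < r) U k.
set s := dotv (c i) (c j).
set u := tens3 (a i) (b j) (c i).
set w := tens3 (a i) (b j) (c j).
have uu : dotv u u = 1 by rewrite dot_tens3 !normv1 ?mulr1 //.
have ww : dotv w w = 1 by rewrite dot_tens3 !normv1 ?mulr1 //.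
have uw : dotv u w = s by rewrite dot_tens3 !normv1 // !mul1r.
have hu : exists al, u = U i *m al.
  apply/(hU i).2; exists 0, (b j), 0.
  by rewrite /tens3 !tens0mx !tensmx0 add0r addr0.
have hw : exists al, w = U j *m al.
  apply/(hU j).2; exists (a i), 0, 0.
  by rewrite /tens3 !(tens0mx, tensmx0) !addr0.
pose e : R := if 0 <= s then 1 else -1.
have ee : e * e = 1 by rewrite /e; case: ifP => _; rewrite ?mulr1 ?mulrNN ?mulr1.
have es : e * s = `|s|.
  by rewrite /e; case: ifP => h; [rewrite mul1r ger0_norm | rewrite mulN1r ltr0_norm // ltNge h].
pose y := fun k : 'I_r => (if k == i then (U k)^T *m u
           else if k == j then - e *: ((U k)^T *m w) else 0 : 'cV[R]_(d k)).
pose x0 := \mxcol_k y k.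
have Mx0 : M *m x0 = u - e *: w.
  rewrite /M /x0 mul_mxrow_mxcol (bigD1 i) //= (bigD1 j) /=; last by rewrite eq_sym hij.
  rewrite big1; last by move=> k /andP [/negbTE hki /negbTE hkj]; rewrite /y hki hkj mulmx0.
  have hji : (j == i) = false by apply/negbTE; rewrite eq_sym.
  rewrite /y eqxx hji eqxx addr0.
  by rewrite -scalemxAr (@proj_onb _ _ _ _ _ (hU i).1 hu) (@proj_onb _ _ _ _ _ (hU j).1 hw) scaleNr.
have x0x0 : dotv x0 x0 = 2.
  rewrite {1}/dotv /x0 tr_mxcol mul_mxrow_mxcol summxE (bigD1 i) //= (bigD1 j) /=;
    last by rewrite eq_sym hij.
  rewrite big1; last first.
    by move=> k /andP [/negbTE hki /negbTE hkj]; rewrite /y hki hkj trmx0 mulmx0 mxE.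
  have hji : (j == i) = false by apply/negbTE; rewrite eq_sym.
  rewrite /y eqxx hji eqxx addr0.
  rewrite -/(dotv _ _) (@dot_onb _ _ _ _ _ (hU i).1 hu) uu.
  rewrite -/(dotv _ _) dotvZl dotvZr (@dot_onb _ _ _ _ _ (hU j).1 hw) ww.
  by rewrite mulr1 mulrNN ee.
have Mx0Mx0 : dotv (M *m x0) (M *m x0) = 2 - 2 * `|s|.
  rewrite Mx0 !(dotvDl, dotvDr, dotvZl, dotvZr) -!scaleN1r !(dotvZl, dotvZr).
  rewrite uu ww uw dotvC uw -es.
  rewrite mulr1 !mulN1r mulrN opprK ee; lra.
pose x := (Num.sqrt (2:R))^-1 *: x0.
have s2 : (Num.sqrt (2:R))^-1 ^+ 2 = 2^-1 by rewrite exprVn sqr_sqrtr.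
have hx : normv x = 1.
  by rewrite /normv dotvZl dotvZr mulrA -expr2 s2 x0x0 mulVf // sqrtr1.
have hMx : normv (M *m x) = Num.sqrt (1 - `|s|).
  rewrite /normv -scalemxAr dotvZl dotvZr mulrA -expr2 s2 Mx0Mx0.
  by congr Num.sqrt; field.
have Sge0 : 0 <= sigma_min M.
  apply: lb_le_inf; first by exists (normv (M *m x)); exists x.
  by move=> _ [z _ <-]; exact: sqrtr_ge0.
have Sle : sigma_min M <= Num.sqrt (1 - `|s|).
  rewrite -hMx; apply: ge_inf; last by exists x.
  by exists 0; move=> _ [z _ <-]; exact: sqrtr_ge0.
rewrite /inv_sqrt_gap /kappa -/s.
have [s1|s1] := eqVneq `|s| 1.
  have -> : sigma_min M = 0.
    by apply/le_anti; rewrite Sge0 andbT; move: Sle; rewrite s1 subrr sqrtr0.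
  by rewrite eqxx.
case: eqP => [_|hs0]; first exact: leey.
rewrite lee_fin.
have sp : 0 < sigma_min M by rewrite lt_neqAle eq_sym Sge0 andbT; apply/eqP.
have gp : 0 < Num.sqrt (1 - `|s|) := lt_le_trans sp Sle.
by rewrite lef_pV2 ?posrE.
Qed.
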